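(* For each $n$, consider the distributed system (under the RJSQ policy) and its synchronized service pool (SSP), as described in the context, both initially empty. Then the process $\Gamma^\star_n(t)=\sum_{k=1}^sW_{n,k}(t)-W^\star_n(t)$, $t\ge0$, has continuous, piecewise linear sample paths, and $\Gamma^\star_n(t)\ge0$ for all $t\ge0$.
   Context: Distributed system $n$: $s\ge2$ stations with single work-conserving FCFS servers, unlimited waiting room, service rates $0<\mu_1\le\cdots\le\mu_s$, $\mu=\sum_k\mu_k$. Customer $j$ appears at time $a_n(j)=\sum_{i\le j}z(i)/\lambda_n$ ($z(i)$ i.i.d. nonnegative with mean 1), has traveling delay vector $\sqrt n\boldsymbol\gamma(j)$ ($\boldsymbol\gamma(j)$ i.i.d. random vectors in $\mathbb R_+^s$ taking finitely many values $\boldsymbol d_1,\ldots,\boldsymbol d_b$), and is routed by the randomized join-the-shortest-queue (RJSQ) policy to a destination $\xi_n(j)\in\{1,\ldots,s\}$ (each customer is sent to station $k$ with probability depending on the ranking of the weighted queue lengths $Q_{n,\ell}/\mu_\ell$ at its appearance), arriving at station $\xi_n(j)$ at time $a_n(j)+\sqrt n\gamma_{\xi_n(j)}(j)$. The $i$th customer served at station $k$ has service requirement $w_k(i)$ (i.i.d. nonnegative, mean 1) and service time $w_k(i)/\mu_k$. $W_{n,k}(t)$ is the stationed workload at station $k$: the total unfinished service requirement (remaining service time multiplied by $\mu_k$) of customers present at station $k$ at time $t$. SSP $n$: a single station with one work-conserving FCFS server of rate $\mu$ and unlimited waiting room. For each customer $j$ of distributed system $n$ there is a counterpart that is of class $k$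 if $\xi_n(j)=k$, arrives at the SSP station at the same time $a_n(j)+\sqrt n\gamma_{\xi_n(j)}(j)$, and has the same service requirement (the $i$th class-$k$ customer requires $w_k(i)$, with service time $w_k(i)/\mu$). $W^\star_n(t)$ is the total unfinished service requirement of customers present at the SSP station at time $t$. *)

(* Defs.v *)
From HB Require Import structures.
From mathcomp Require Import all_boot all_order all_algebra.
From mathcomp Require Import all_classical all_reals all_analysis.
Set Implicit Arguments. Unset Strict Implicit. Unset Printing Implicit Defensive.
Import Order.TTheory GRing.Theory Num.Theory.
Import numFieldNormedType.Exports.
Local Open Scope classical_set_scope.
Local Open Scope ring_scope.

(* Customers are indexed by j : nat (j = 0 is the paper's customer 1).
   Appearance time  a_n(j) = (sum_{i <= j} z i) / lam.
   Customer j arrives at its destination xi j at time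
   a_n(j) + sqrt n * gam j (xi j). *)
Definition arr_time (R : realType) (s n : nat) (lam : R) (z : nat -> R)
    (gam : nat -> 'I_s -> R) (xi : nat -> 'I_s) (j : nat) : R :=
  (\sum_(0 <= i < j.+1) z i) / lam + Num.sqrt (n%:R) * gam j (xi j).

Definition n_arr_upto (R : realType) (s : nat) (arr : nat -> R)
    (xi : nat -> 'I_s) (k : 'I_s) (t : R) (J : nat) : nat :=
  count (fun j => (xi j == k) && (arr j <= t)) (iota 0 J).

(* Total service requirement brought to station k during [0, t]:
   under FCFS the customers arrived by time t are the first N_k(t) served
   ones, so this is  sum_{i < N_k(t)} w k i,  N_k(t) the number of
   customers that arrived at station k by time t (sup over J of the
   truncated counts). *)
Definition cum_work (R : realType) (s : nat) (arr : nat -> R)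
    (xi : nat -> 'I_s) (w : 'I_s -> nat -> R) (k : 'I_s) (t : R) : R :=
  sup [set (\sum_(0 <= i < n_arr_upto arr xi k t J) w k i) | J in [set: nat]].

(* Workload (unfinished service requirement) at time t of an initially
   empty single-server work-conserving station whose server depletes
   service requirement at rate c, given the cumulative requirement input
   A : the standard one-sided reflection of X(u) = A(u) - c u. *)
Definition workload (R : realType) (A : R -> R) (c t : R) : R :=
  let X := fun u => A u - c * u in
  X t - Num.min 0 (inf [set X u | u in [set u | 0 <= u <= t]]).

Definition W_station (R : realType) (s : nat) (mu : 'I_s -> R) (arr : nat -> R)
    (xi : nat -> 'I_s) (w : 'I_s -> nat -> R) (k : 'I_s) (t : R) : R :=
  workload (cum_work arr xi w k) (mu k) t.

Definition W_ssp (R : realType) (s : nat) (mu : 'I_s -> R) (arr : nat -> R)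
    (xi : nat -> 'I_s) (w : 'I_s -> nat -> R) (t : R) : R :=
  workload (fun u => \sum_(k < s) cum_work arr xi w k u) (\sum_(k < s) mu k) t.

Definition Gamma_star (R : realType) (s : nat) (mu : 'I_s -> R) (arr : nat -> R)
    (xi : nat -> 'I_s) (w : 'I_s -> nat -> R) (t : R) : R :=
  \sum_(k < s) W_station mu arr xi w k t - W_ssp mu arr xi w t.

Definition piecewise_linear (R : realType) (f : R -> R) : Prop :=
  forall T : R, 0 < T ->
    exists (m : nat) (tt : nat -> R),
      [/\ tt 0%N = 0, tt m = T,
          (forall i, (i < m)%N -> tt i < tt i.+1) &
          (forall i, (i < m)%N -> exists a b : R,
              forall x, tt i <= x <= tt i.+1 -> f x = a * x + b)].

(* Main.v *)
Require Import Defs.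
From HB Require Import structures.
From mathcomp Require Import all_boot all_order all_algebra.
From mathcomp Require Import all_classical all_reals all_analysis.
Import Order.TTheory GRing.Theory Num.Theory.
Import numFieldNormedType.Exports.
Local Open Scope classical_set_scope.
Local Open Scope ring_scope.
From mathcomp Require Import ring lra.

Set Implicit Arguments. Unset Strict Implicit.
Section PL.
Variable R : realType.
Implicit Types (f g h : R -> R) (a b c : R).

Definition affine_on f a b := exists p q : R, forall x, a <= x <= b -> f x = p * x + q.

Inductive PLi (f : R -> R) : R -> R -> Prop :=
| PLi_aff a b : a < b -> affine_on f a b -> PLi f a b
| PLi_split a c b : PLi f a c -> PLi f c b -> PLi f a b.

Lemma PLi_lt f a b : PLi f a b -> a < b.
Proof. by elim=> // a' c b' _ h1 _ h2; exact: lt_trans h1 h2. Qed.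

Lemma affine_on_sub f a b a' b' : affine_on f a b -> a <= a' -> b' <= b -> affine_on f a' b'.
Proof.
move=> [p [q H]] ha hb; exists p, q => x /andP[h1 h2]; apply: H.
by rewrite (le_trans ha h1) (le_trans h2 hb).
Qed.

Lemma PLi_ext f g a b : PLi f a b -> (forall x, a <= x <= b -> f x = g x) -> PLi g a b.
Proof.
elim=> {a b} [a b ab [p [q H]]|a c b P1 IH1 P2 IH2] E.
  apply: PLi_aff => //; exists p, q => x hx; rewrite -E //; exact: H.
have ac := PLi_lt P1; have cb := PLi_lt P2.
apply: (PLi_split (c := c)).
  apply: IH1 => x /andP[h1 h2]; apply: E; rewrite h1 /=; exact: (le_trans h2 (ltW cb)).
apply: IH2 => x /andP[h1 h2]; apply: E; rewrite h2 andbT; exact: (le_trans (ltW ac) h1).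
Qed.

Lemma PLi_restr f a b : PLi f a b -> forall a' b', a <= a' -> a' < b' -> b' <= b -> PLi f a' b'.
Proof.
elim=> {a b} [a b ab Haff|a c b P1 IH1 P2 IH2] a' b' h1 h2 h3.
  by apply: PLi_aff => //; exact: affine_on_sub Haff h1 h3.
case: (leP b' c) => hb'c; first exact: IH1.
case: (leP c a') => hca'; first exact: IH2.
apply: (PLi_split (c := c)); [apply: IH1 | apply: IH2] => //.
Qed.

Lemma PLi_scale k f a b : PLi f a b -> PLi (fun x => k * f x) a b.
Proof.
elim=> {a b} [a b ab [p [q H]]|a c b _ IH1 _ IH2].
  apply: PLi_aff => //; exists (k * p), (k * q) => x hx; rewrite H //; ring.
exact: PLi_split IH1 IH2.
Qed.

Lemma PLi_add_aff g a b : PLi g a b -> forall f, affine_on f a b -> PLi (fun x => f x + g x) a b.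
Proof.
elim=> {a b} [a b ab [p [q H]]|a c b P1 IH1 P2 IH2] f [p' [q' H']].
  apply: PLi_aff => //; exists (p' + p), (q' + q) => x hx; rewrite H // H' //; ring.
have ac := PLi_lt P1; have cb := PLi_lt P2.
apply: (PLi_split (c := c)); [apply: IH1 | apply: IH2].
  by apply: (affine_on_sub (a:=a) (b:=b)); [exists p', q'| |exact: ltW].
by apply: (affine_on_sub (a:=a) (b:=b)); [exists p', q'|exact: ltW|].
Qed.

Lemma PLi_add f g a b : PLi f a b -> PLi g a b -> PLi (fun x => f x + g x) a b.
Proof.
move=> P; elim: P g => {a b} [a b ab Haff|a c b P1 IH1 P2 IH2] g Pg.
  exact: PLi_add_aff.
have ac := PLi_lt P1; have cb := PLi_lt P2.
apply: (PLi_split (c := c)); [apply: IH1 | apply: IH2];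
  apply: (PLi_restr Pg) => //; exact: ltW.
Qed.

Lemma PLi_affine p q a b : a < b -> PLi (fun x => p * x + q) a b.
Proof. by move=> ab; apply: PLi_aff => //; exists p, q. Qed.

Lemma PLi_abs_aff_sign f a b : a < b -> affine_on f a b ->
  (0 <= f a /\ 0 <= f b) \/ (f a <= 0 /\ f b <= 0) -> PLi (fun x => `|f x|) a b.
Proof.
move=> ab [p [q H]] hs.
have ha : a <= a <= b by rewrite lexx ltW.
have hb : a <= b <= b by rewrite lexx ltW.
move: hs; rewrite (H a ha) (H b hb) => hs.
have key : forall x, a <= x <= b -> (p * a <= p * x /\ p * x <= p * b) \/
   (p * b <= p * x /\ p * x <= p * a).
  move=> x /andP[h1 h2].
  case: (leP 0 p) => hp.
    by left; split; apply: ler_wpM2l.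
  by right; split; apply: ler_wnM2l => //; exact: ltW.
case: hs => [[u1 u2]|[u1 u2]].
  apply: PLi_aff => //; exists p, q => x hx; rewrite H //.
  rewrite ger0_norm //; case: (key x hx) => -[k1 k2]; lra.
apply: PLi_aff => //; exists (- p), (- q) => x hx; rewrite H //.
rewrite ler0_norm; first ring.
case: (key x hx) => -[k1 k2]; lra.
Qed.

Lemma PLi_abs_aff f a b : a < b -> affine_on f a b -> PLi (fun x => `|f x|) a b.
Proof.
move=> ab Haff.
case: (leP 0 (f a)) => ha; case: (leP 0 (f b)) => hb.
- by apply: PLi_abs_aff_sign => //; left.
- have [p [q H]] := Haff.
  have Ha : f a = p * a + q by apply: H; rewrite lexx ltW.
  have Hb : f b = p * b + q by apply: H; rewrite lexx ltW.
  have hp : p < 0.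
    have : p * (b - a) < 0 by lra.
    by rewrite pmulr_llt0 // subr_gt0.
  have pn : p != 0 by rewrite lt_eqF.
  set c := - q / p.
  have hc : p * c + q = 0 by rewrite /c mulrC divfK //; ring.
  case: (eqVneq (f a) 0) => fa0.
    by apply: PLi_abs_aff_sign => //; right; split; [rewrite fa0 | exact: ltW].
  have ha' : 0 < f a by rewrite lt_def fa0.
  have ac' : a < c by rewrite /c ltr_ndivlMr //; lra.
  have ac := ltW ac'.
  have cb : c < b.
    rewrite /c ltr_ndivrMr //; lra.
  have fc : f c = 0 by rewrite H // ac ltW.
  apply: (PLi_split (c := c)); apply: PLi_abs_aff_sign => //.
  + exact: affine_on_sub Haff (lexx _) (ltW cb).
  + by left; rewrite fc.
  + exact: affine_on_sub Haff ac (lexx _).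
  + by right; rewrite fc; split => //; exact: ltW.
- have [p [q H]] := Haff.
  have Ha : f a = p * a + q by apply: H; rewrite lexx ltW.
  have Hb : f b = p * b + q by apply: H; rewrite lexx ltW.
  have hp : 0 < p.
    have : 0 < p * (b - a) by lra.
    by rewrite pmulr_lgt0 // subr_gt0.
  have pn : p != 0 by rewrite gt_eqF.
  set c := - q / p.
  have hc : p * c + q = 0 by rewrite /c mulrC divfK //; ring.
  have ac : a < c by rewrite /c ltr_pdivlMr //; lra.
  case: (eqVneq (f b) 0) => fb0.
    by apply: PLi_abs_aff_sign => //; right; split; [exact: ltW | rewrite fb0].
  have hb' : 0 < f b by rewrite lt_def fb0.
  have cb : c < b by rewrite /c ltr_pdivrMr //; lra.
  have fc : f c = 0 by rewrite H // !ltW.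
  apply: (PLi_split (c := c)); apply: PLi_abs_aff_sign => //.
  + exact: affine_on_sub Haff (lexx _) (ltW cb).
  + by right; rewrite fc; split => //; exact: ltW.
  + exact: affine_on_sub Haff (ltW ac) (lexx _).
  + by left; rewrite fc.
- by apply: PLi_abs_aff_sign => //; right; split; exact: ltW.
Qed.

Lemma PLi_abs f a b : PLi f a b -> PLi (fun x => `|f x|) a b.
Proof.
elim=> {a b} [a b ab Haff|a c b _ IH1 _ IH2]; first exact: PLi_abs_aff.
exact: PLi_split IH1 IH2.
Qed.

Lemma minE_abs (x y : R) : Num.min x y = (x + y - `|x - y|) / 2.
Proof. exact: minr_absE. Qed.

Lemma PLi_min f g a b : PLi f a b -> PLi g a b -> PLi (fun x => Num.min (f x) (g x)) a b.
Proof.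
move=> Pf Pg.
have P1 : PLi (fun x => f x + g x) a b by exact: PLi_add.
have P2 : PLi (fun x => `|f x + (-1) * g x|) a b.
  by apply: PLi_abs; apply: PLi_add => //; exact: PLi_scale.
have P3 := PLi_scale (2^-1) (PLi_add P1 (PLi_scale (-1) P2)).
apply: (PLi_ext P3) => x _; rewrite minE_abs; rewrite mulN1r mulN1r mulrC //.
Qed.

Definition PLseq f a b := exists (m : nat) (tt : nat -> R),
      [/\ tt 0%N = a, tt m = b,
          (forall i, (i < m)%N -> tt i < tt i.+1) &
          (forall i, (i < m)%N -> exists p q : R,
              forall x, tt i <= x <= tt i.+1 -> f x = p * x + q)].

Lemma PLi_seq f a b : PLi f a b -> PLseq f a b.
Proof.
elim=> {a b} [a b ab [p [q H]]|a c b _ [m1 [t1 [h10 h1m h1i h1a]]] _ [m2 [t2 [h20 h2m h2i h2a]]]].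
  exists 1%N, (fun i => if i == 0%N then a else b); split => //.
    by case.
  by case => // _; exists p, q.
pose tt i := if (i <= m1)%N then t1 i else t2 (i - m1)%N.
have ttL i : (i <= m1)%N -> tt i = t1 i by rewrite /tt => ->.
have ttR i : (m1 <= i)%N -> tt i = t2 (i - m1)%N.
  rewrite /tt => h; case: ifP => // h'.
  have -> : i = m1 by apply/eqP; rewrite eqn_leq h h'.
  by rewrite subnn h1m h20.
exists (m1 + m2)%N, tt; split.
- by rewrite ttL.
- by rewrite ttR ?leq_addr // addKn.
- move=> i hi; case: (ltnP i m1) => him.
    by rewrite !ttL //; [exact: h1i | exact: ltnW].
  rewrite !ttR //; last exact: leqW.
  rewrite subSn //; apply: h2i; rewrite ltn_subLR //.
- move=> i hi; case: (ltnP i m1) => him.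
    by rewrite !ttL //; [exact: h1a | exact: ltnW].
  rewrite !ttR //; last exact: leqW.
  rewrite subSn //; apply: h2a; rewrite ltn_subLR //.
Qed.

End PL.
Section RI.
Variable R : realType.
Definition rinf (A : R -> R) (c t : R) := inf [set A u - c * u | u in [set u | 0 <= u <= t]].

Lemma workloadE (A : R -> R) c t : workload A c t = (A t - c * t) - Num.min 0 (rinf A c t).
Proof. by []. Qed.

Variables (A : R -> R) (c : R).
Hypothesis Amono : forall u v : R, 0 <= u -> u <= v -> A u <= A v.
Hypothesis c0 : 0 <= c.

Lemma rinf_le (t u : R) : 0 <= u <= t -> rinf A c t <= A u - c * u.
Proof.
move=> hu; have /andP[u0 ut] := hu.
apply: ge_inf; last by exists u.
exists (A 0 - c * t) => y [v /andP[v0 vt] <-].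
have := Amono (lexx 0) v0; have := ler_wpM2l c0 vt; lra.
Qed.

Lemma rinf_ge (t v : R) : 0 <= t -> (forall u, 0 <= u <= t -> v <= A u - c * u) -> v <= rinf A c t.
Proof.
move=> t0 H; apply: lb_le_inf.
  by exists (A 0 - c * 0), 0 => //=; rewrite lexx t0.
by move=> y [u hu <-]; exact: H.
Qed.

Lemma rinf_mono (t t' : R) : 0 <= t -> t <= t' -> rinf A c t' <= rinf A c t.
Proof.
move=> t0 tt'; apply: rinf_ge => // u /andP[u0 ut]; apply: rinf_le.
by rewrite u0 (le_trans ut tt').
Qed.

Lemma rinf_lip (t t' : R) : 0 <= t -> t <= t' -> rinf A c t - c * (t' - t) <= rinf A c t'.
Proof.
move=> t0 tt'; apply: rinf_ge => [|u /andP[u0 ut']]; first exact: le_trans tt'.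
have h1 : 0 <= c * (t' - t) by apply: mulr_ge0 => //; rewrite subr_ge0.
case: (leP u t) => ut.
  have := rinf_le (u := u) (t := t); rewrite u0 ut => /(_ isT); lra.
have h2 := rinf_le (u := t) (t := t); rewrite t0 lexx in h2.
have h3 := Amono t0 (ltW ut).
have h4 : c * u <= c * t' by exact: ler_wpM2l.
have h5 : c * (t' - t) = c * t' - c * t by ring.
have := h2 isT; lra.
Qed.

Lemma rinf_lip_abs (t t' : R) : 0 <= t -> 0 <= t' -> `|rinf A c t - rinf A c t'| <= c * `|t - t'|.
Proof.
wlog tt' : t t' / t <= t'.
  move=> W t0 t'0; case: (leP t t') => h; first exact: W.
  by rewrite distrC (distrC t); apply: W => //; exact: ltW.
move=> t0 t'0.
have := rinf_mono t0 tt'; have := rinf_lip t0 tt' => h1 h2.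
rewrite (ger0_norm (x := rinf A c t - rinf A c t')) ?subr_ge0 // (ler0_norm (x := t - t')) ?subr_le0 //.
lra.
Qed.

Lemma rinf_seg (a b t : R) : 0 <= a -> a < b -> (forall u, a <= u < b -> A u = A a) ->
  a <= t <= b -> rinf A c t = Num.min (rinf A c a) (A a - c * t).
Proof.
move=> a0 ab Hc /andP[hat tb].
have c0' := c0.
have t0 : 0 <= t := le_trans a0 hat.
apply/eqP; rewrite eq_le; apply/andP; split; last first.
  apply: rinf_ge => // u /andP[u0 ut].
  case: (leP u a) => ua.
    rewrite ge_min; apply/orP; left; apply: rinf_le; by rewrite u0 ua.
  rewrite ge_min; apply/orP; right.
  have : c * u <= c * t by exact: ler_wpM2l.
  have := Amono a0 (ltW ua); lra.
rewrite le_min; apply/andP; split; first exact: rinf_mono.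
have key : forall t', a <= t' -> t' < b -> t' <= t -> rinf A c t <= A a - c * t'.
  move=> t' at' t'b t't.
  apply: (le_trans (rinf_mono (le_trans a0 at') t't)).
  rewrite -(Hc t'); last by rewrite at' t'b.
  by apply: rinf_le; rewrite lexx (le_trans a0 at').
case: (ltP t b) => tb'; first exact: key.
have tb2 : t = b by apply/eqP; rewrite eq_le tb tb'.
case: (leP (rinf A c t) (A a - c * t)) => // hlt.
exfalso.
have c1 : 0 < c + 1 by lra.
set e := rinf A c t - (A a - c * t).
have e0 : 0 < e by rewrite /e subr_gt0.
set d := Num.min (b - a) (e / (2 * (c + 1))).
have d0 : 0 < d by rewrite lt_min subr_gt0 ab /=; apply: divr_gt0 => //; lra.
have dba : d <= b - a by rewrite ge_min lexx.
have de : d <= e / (2 * (c + 1)) by rewrite ge_min lexx orbT.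
have cd : c * d <= e / 2.
  have : c * d <= (c + 1) * d by apply: ler_wpM2r; [exact: ltW|lra].
  have : (c + 1) * d <= (c + 1) * (e / (2 * (c + 1))) by apply: ler_wpM2l => //; exact: ltW.
  have -> : (c + 1) * (e / (2 * (c + 1))) = e / 2 by field; lra.
  lra.
have := key (b - d); rewrite -tb2 in dba *.
have h1 : a <= t - d by lra.
have h2 : t - d < t by lra.
move=> /(_ h1 h2 (ltW h2)).
have -> : A a - c * (t - d) = A a - c * t + c * d by ring.
rewrite /e in cd e0; lra.
Qed.
End RI.
Lemma lip_cont (R : realType) (f : R -> R) (L : R) : 0 <= L ->
  (forall x y, 0 <= x -> 0 <= y -> `|f x - f y| <= L * `|x - y|) ->
  {within [set t : R | 0 <= t], continuous f}.
Proof.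
move=> L0 Hf; apply/subspace_continuousP => x x0.
apply/cvgrPdist_lt => e e0; rewrite near_withinE.
exists (e / (L + 1)) => /=; first by apply: divr_gt0 => //; lra.
move=> t xt t0.
apply: (le_lt_trans (Hf x t x0 t0)).
have L1 : 0 < L + 1 by lra.
have : L * `|x - t| <= L * (e / (L+1)) by apply: ler_wpM2l => //; exact: ltW.
move=> H; apply: (le_lt_trans H).
rewrite mulrA ltr_pdivrMr // ; nra.
Qed.

Lemma sumnat_mono (R : realType) (F : nat -> R) (m1 m2 : nat) : (forall i, 0 <= F i) ->
  (m1 <= m2)%N -> \sum_(0 <= i < m1) F i <= \sum_(0 <= i < m2) F i.
Proof.
move=> F0 h; rewrite -(subnKC h); elim: (m2 - m1)%N => [|k IH]; first by rewrite addn0.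
rewrite addnS big_nat_recr //=.
by apply: (le_trans IH); rewrite lerDl.
Qed.

Lemma count_lt (T : eqType) (P Q : pred T) (s : seq T) (x : T) :
  subpred P Q -> x \in s -> Q x -> ~~ P x -> (count P s < count Q s)%N.
Proof.
move=> PQ; elim: s => //= y s IH; rewrite in_cons => /orP[/eqP <-|xs] Qx Px.
  rewrite Qx (negbTE Px) add0n add1n ltnS; exact: sub_count.
have := IH xs Qx Px; case Py: (P y); first by rewrite (PQ _ Py) => h; rewrite ltn_add2l.
by rewrite add0n => h; apply: (leq_trans h); exact: leq_addl.
Qed.

Section Model.
Variable R : realType.
Variables (s : nat) (mu : 'I_s -> R) (n : nat) (lam : R) (z : nat -> R)
  (b : nat) (d : 'I_b -> 'I_s -> R) (gam : nat -> 'I_s -> R) (xi : nat -> 'I_s)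
  (w : 'I_s -> nat -> R).
Hypotheses (hmu : forall k, 0 < mu k) (hlam : 0 < lam) (hz : forall i, 0 <= z i)
  (hzdiv : forall M : R, exists J : nat, M < \sum_(0 <= i < J) z i)
  (hd : forall l k, 0 <= d l k) (hgam : forall j, exists l, gam j = d l)
  (hw : forall k i, 0 <= w k i).

Local Notation arr := (arr_time n lam z gam xi).
Local Notation A k := (cum_work arr xi w k).
Local Notation nar k t J := (n_arr_upto arr xi k t J).

Lemma arr_big (T : R) : exists J, forall j, (J <= j)%N -> T < arr j.
Proof.
have [J HJ] := hzdiv (T * lam); exists J => j hj.
rewrite /arr_time.
have g0 : 0 <= Num.sqrt n%:R * gam j (xi j).
  by apply: mulr_ge0; [exact: sqrtr_ge0 | have [l ->] := hgam j; exact: hd].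
have h1 : \sum_(0 <= i < J) z i <= \sum_(0 <= i < j.+1) z i.
  by apply: sumnat_mono => //; exact: leqW.
have h2 : T < (\sum_(0 <= i < j.+1) z i) / lam.
  by rewrite ltr_pdivlMr //; exact: (lt_le_trans HJ h1).
by apply: (lt_le_trans h2); rewrite lerDl.
Qed.

Lemma nar_monoJ k t J1 J2 : (J1 <= J2)%N -> (nar k t J1 <= nar k t J2)%N.
Proof.
move=> h; rewrite /n_arr_upto -(subnKC h) iotaD count_cat; exact: leq_addr.
Qed.

Lemma nar_stable k (t : R) J J2 : (forall j, (J <= j)%N -> t < arr j) -> (J <= J2)%N ->
  nar k t J2 = nar k t J.
Proof.
move=> HJ h; rewrite /n_arr_upto -(subnKC h) iotaD count_cat.
rewrite (@eq_in_count _ _ pred0 (iota (0 + J) (J2 - J))); first by rewrite count_pred0 addn0.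

move=> j; rewrite mem_iota add0n => /andP[h1 _] /=.
by rewrite (lt_geF (HJ j h1)) andbF.
Qed.

Lemma nar_monot k (t t' : R) J : t <= t' -> (nar k t J <= nar k t' J)%N.
Proof.
move=> h; apply: sub_count => j /= /andP[-> h1] /=; exact: le_trans h1 h.
Qed.

Lemma cum_workE k (t : R) J : (forall j, (J <= j)%N -> t < arr j) ->
  A k t = \sum_(0 <= i < nar k t J) w k i.
Proof.
move=> HJ.
have ub : forall J', \sum_(0 <= i < nar k t J') w k i <= \sum_(0 <= i < nar k t J) w k i.
  move=> J'; apply: sumnat_mono => //.
  rewrite -(nar_stable k HJ (leq_maxl J J')); exact: nar_monoJ (leq_maxr J J').
apply/eqP; rewrite eq_le; apply/andP; split.
  apply: ge_sup; first by exists (\sum_(0 <= i < nar k t 0) w k i), 0%N.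
  by move=> y [J' _ <-].
apply: ub_le_sup; last by exists J.
by exists (\sum_(0 <= i < nar k t J) w k i) => y [J' _ <-].
Qed.

Lemma A_mono k (u v : R) : 0 <= u -> u <= v -> A k u <= A k v.
Proof.
move=> _ uv; have [J HJ] := arr_big v.
rewrite (cum_workE k (J := J)); last by move=> j hj; exact: (le_lt_trans uv (HJ j hj)).
rewrite (cum_workE k HJ); apply: sumnat_mono => //; exact: nar_monot.
Qed.

Local Notation Astar := (fun u => \sum_(k < s) A k u).
Local Notation cstar := (\sum_(k < s) mu k).

Lemma Astar_mono (u v : R) : 0 <= u -> u <= v -> Astar u <= Astar v.
Proof. by move=> u0 uv; apply: ler_sum => k _; exact: A_mono. Qed.

Lemma GE (t : R) : Gamma_star mu arr xi w t =
  Num.min 0 (rinf Astar cstar t) - \sum_(k < s) Num.min 0 (rinf (A k) (mu k) t).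
Proof.
rewrite /Gamma_star /W_station /W_ssp.
under eq_bigr do rewrite workloadE.
rewrite workloadE !sumrB mulr_suml; ring.
Qed.

Lemma min0_lip (x y : R) : `|Num.min 0 x - Num.min 0 y| <= `|x - y|.
Proof.
have h1 := ler_norm (x - y).
have h2 : - (x - y) <= `|x - y| by rewrite -normrN; exact: ler_norm.
rewrite ler_norml; case: (lerP 0 x) => hx; case: (lerP 0 y) => hy; apply/andP; split; lra.
Qed.

Lemma cstar_ge0 : 0 <= cstar.
Proof. by apply: sumr_ge0 => k _; exact: ltW. Qed.

Lemma G_ge0 (t : R) : 0 <= t -> 0 <= Gamma_star mu arr xi w t.
Proof.
move=> t0; rewrite GE.
have hs : \sum_(k < s) rinf (A k) (mu k) t <= rinf Astar cstar t.
  apply: (rinf_ge (A := Astar)) => // u hu.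
  rewrite mulr_suml -sumrB; apply: ler_sum => k _.
  exact: (rinf_le (A_mono k) (ltW (hmu k))).
have h1 : \sum_(k < s) Num.min 0 (rinf (A k) (mu k) t) <= \sum_(k < s) (0 : R).
  by apply: ler_sum => k _; rewrite ge_min lexx.
rewrite big1_eq in h1.
have h2 : \sum_(k < s) Num.min 0 (rinf (A k) (mu k) t) <= \sum_(k < s) rinf (A k) (mu k) t.
  by apply: ler_sum => k _; rewrite ge_min lexx orbT.
rewrite subr_ge0 le_min h1 /=; exact: le_trans h2 hs.
Qed.

Lemma G_lip (t t' : R) : 0 <= t -> 0 <= t' ->
  `|Gamma_star mu arr xi w t - Gamma_star mu arr xi w t'| <= (cstar + cstar) * `|t - t'|.
Proof.
move=> t0 t'0; rewrite !GE.
set m1 := Num.min 0 (rinf Astar cstar t).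
set m2 := Num.min 0 (rinf Astar cstar t').
have -> : m1 - \sum_(k < s) Num.min 0 (rinf (A k) (mu k) t) -
   (m2 - \sum_(k < s) Num.min 0 (rinf (A k) (mu k) t')) =
   (m1 - m2) - \sum_(k < s) (Num.min 0 (rinf (A k) (mu k) t) - Num.min 0 (rinf (A k) (mu k) t')).
  rewrite sumrB; ring.
apply: (le_trans (ler_normB _ _)); rewrite mulrDl; apply: lerD.
  apply: (le_trans (min0_lip _ _)).
  exact: (rinf_lip_abs Astar_mono cstar_ge0).
apply: (le_trans (ler_norm_sum _ _ _)); rewrite mulr_suml; apply: ler_sum => k _.
apply: (le_trans (min0_lip _ _)).
exact: (rinf_lip_abs (A_mono k) (ltW (hmu k))).
Qed.

Lemma PLi_const (K a b' : R) : a < b' -> PLi (fun _ => K) a b'.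
Proof. by move=> ab; apply: (PLi_ext (PLi_affine 0 K ab)) => x _; rewrite mul0r add0r. Qed.

Lemma PLi_aff' (p q a b' : R) : a < b' -> PLi (fun x => q - p * x) a b'.
Proof. by move=> ab; apply: (PLi_ext (PLi_affine (- p) q ab)) => x _; ring. Qed.

Lemma PLi_sum (I : Type) (r : seq I) (F : I -> R -> R) (a b' : R) : a < b' ->
  (forall i, PLi (F i) a b') -> PLi (fun x => \sum_(i <- r) F i x) a b'.
Proof.
move=> ab HF; elim: r => [|i r IH].
  by apply: (PLi_ext (PLi_const 0 ab)) => x _; rewrite big_nil.
by apply: (PLi_ext (PLi_add (HF i) IH)) => x _; rewrite big_cons.
Qed.

Lemma G_elem (T : R) J (a b' : R) : (forall j, (J <= j)%N -> T < arr j) -> 0 <= a -> a < b' -> b' <= T ->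
  (forall j, (j < J)%N -> ~~ ((a < arr j) && (arr j < b'))) -> PLi (Gamma_star mu arr xi w) a b'.
Proof.
move=> HJ a0 ab bT Hno.
have Aconst : forall k u, a <= u < b' -> A k u = A k a.
  move=> k u /andP[au ub].
  have HJu : forall j, (J <= j)%N -> u < arr j.
    by move=> j hj; apply: le_lt_trans (HJ j hj); exact: le_trans (ltW ub) bT.
  have HJa : forall j, (J <= j)%N -> a < arr j.
    by move=> j hj; apply: le_lt_trans (HJ j hj); exact: le_trans (ltW ab) bT.
  rewrite (cum_workE k HJu) (cum_workE k HJa).
  have -> : n_arr_upto arr xi k u J = n_arr_upto arr xi k a J; last by [].
  apply: eq_in_count => j; rewrite mem_iota add0n => /andP[_ jJ] /=.
  congr andb; apply/idP/idP => h; last exact: le_trans h au.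
  case: (leP (arr j) a) => // h'.
  have := Hno j jJ; rewrite h' /= (le_lt_trans h ub) //.
have Asconst : forall u, a <= u < b' -> Astar u = Astar a.
  by move=> u hu; apply: eq_bigr => k _; exact: Aconst.
have P1 : PLi (fun t => Num.min 0 (Num.min (rinf Astar cstar a) (Astar a - cstar * t))) a b'.
  by apply: PLi_min; [exact: PLi_const | apply: PLi_min; [exact: PLi_const | exact: PLi_aff']].
have P2 : PLi (fun t => \sum_(k < s) Num.min 0 (Num.min (rinf (A k) (mu k) a) (A k a - mu k * t))) a b'.
  apply: PLi_sum => // k.
  by apply: PLi_min; [exact: PLi_const | apply: PLi_min; [exact: PLi_const | exact: PLi_aff']].
apply: (PLi_ext (PLi_add P1 (PLi_scale (-1) P2))) => t ht.
rewrite GE mulN1r (rinf_seg Astar_mono cstar_ge0 a0 ab Asconst ht).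
congr (_ - _); apply: eq_bigr => k _.
by rewrite (rinf_seg (A_mono k) (ltW (hmu k)) a0 ab (Aconst k) ht).
Qed.

Lemma G_PL (T : R) : 0 < T -> PLi (Gamma_star mu arr xi w) 0 T.
Proof.
move=> T0; have [J HJ] := arr_big T.
suff H : forall (N : nat) (a b' : R), 0 <= a -> a < b' -> b' <= T ->
    (count (fun j => ((a < arr j) && (arr j < b'))%R) (iota 0 J) <= N)%N ->
    PLi (Gamma_star mu arr xi w) a b'.
  by apply: (H _ 0 T) => //; exact: leqnn.
elim=> [|N IH] a b' a0 ab bT hc.
  apply: (G_elem HJ a0 ab bT) => j jJ; apply/negP => hj.
  have : has (fun j => (a < arr j) && (arr j < b')) (iota 0 J).
    by apply/hasP; exists j => //; rewrite mem_iota add0n leq0n.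
  by rewrite has_count; rewrite leqn0 in hc; rewrite (eqP hc).
case: (boolP (has (fun j => (a < arr j) && (arr j < b')) (iota 0 J))) => hh; last first.
  apply: (G_elem HJ a0 ab bT) => j jJ; move/hasPn: hh; apply.
  by rewrite mem_iota add0n.
move/hasP: hh => [j jI /andP[aj jb]].
apply: (PLi_split (c := arr j)); apply: IH => //.
- exact: le_trans (ltW jb) bT.
- rewrite -ltnS; apply: leq_trans hc.
  apply: (count_lt (x := j)) => //.
  + by move=> i /= /andP[-> h2]; rewrite (lt_trans h2 jb).
  + by rewrite /= aj jb.
  + by rewrite /= ltxx andbF.
- exact: le_trans a0 (ltW aj).
- rewrite -ltnS; apply: leq_trans hc.
  apply: (count_lt (x := j)) => //.
  + by move=> i /= /andP[h1 ->]; rewrite (lt_trans aj h1).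
  + by rewrite /= aj jb.
  + by rewrite /= ltxx.
Qed.

Lemma main_sec : [/\ {within [set t : R | 0 <= t], continuous (Gamma_star mu arr xi w)},
      piecewise_linear (Gamma_star mu arr xi w) &
      forall t : R, 0 <= t -> 0 <= Gamma_star mu arr xi w t].
Proof.
split.
- apply: (lip_cont (L := cstar + cstar)); first by apply: addr_ge0; exact: cstar_ge0.
  exact: G_lip.
- move=> T T0; exact: (PLi_seq (G_PL T0)).
- exact: G_ge0.
Qed.

End Model.

Unset Implicit Arguments.

Theorem proposition3 (R : realType) (s : nat) (hs : (2 <= s)%N)
    (mu : 'I_s -> R) (hmu : forall k, 0 < mu k)
    (hmono : forall k l : 'I_s, (k <= l)%N -> mu k <= mu l)
    (n : nat) (lam : R) (hlam : 0 < lam)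
    (z : nat -> R) (hz : forall i, 0 <= z i)
    (hzdiv : forall M : R, exists J : nat, M < \sum_(0 <= i < J) z i)
    (b : nat) (d : 'I_b -> 'I_s -> R) (hd : forall l k, 0 <= d l k)
    (gam : nat -> 'I_s -> R) (hgam : forall j, exists l, gam j = d l)
    (xi : nat -> 'I_s)
    (w : 'I_s -> nat -> R) (hw : forall k i, 0 <= w k i) :
  let arr := arr_time n lam z gam xi in
  let G := Gamma_star mu arr xi w in
  [/\ {within [set t : R | 0 <= t], continuous G},
      piecewise_linear G &
      forall t : R, 0 <= t -> 0 <= G t].
Proof.
move=> arr G.
exact: (main_sec n xi hmu hlam hz hzdiv hd hgam hw).
Qed.
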